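(* In the algebra $\mathcal O_q$ defined in the context, with $B_\delta=q^{-2}\mathcal W_1\mathcal W_0-\mathcal W_0\mathcal W_1$, the following hold for all $k\in\mathbb N$: (i) $[\tilde{\mathcal G}_{k+1},\mathcal W_0]_q=(q-q^{-1})\mathcal W_0\tilde{\mathcal G}_{k+1}-q^2[B_\delta,\mathcal W_{-k}]$; (ii) $[\mathcal W_1,\tilde{\mathcal G}_{k+1}]_q=(q-q^{-1})\mathcal W_1\tilde{\mathcal G}_{k+1}+[B_\delta,\mathcal W_{k+1}]$.
   Context: All algebras are associative and unital over a field $\mathbb F$; $q\in\mathbb F$ is nonzero and not a root of unity. For elements $X,Y$ of an algebra, $[X,Y]=XY-YX$ and $[X,Y]_q=qXY-q^{-1}YX$. Let $\rho=-(q^2-q^{-2})^2$. The algebra $\mathcal O_q$ is defined by generators $\mathcal W_{-k},\mathcal W_{k+1},\mathcal G_{k+1},\tilde{\mathcal G}_{k+1}$ ($k\in\mathbb N$) and the following relations for all $k,\ell\in\mathbb N$: $[\mathcal W_0,\mathcal W_{k+1}]=[\mathcal W_{-k},\mathcal W_1]=(\tilde{\mathcal G}_{k+1}-\mathcal G_{k+1})/(q+q^{-1})$; $[\mathcal W_0,\mathcal G_{k+1}]_q=[\tilde{\mathcal G}_{k+1},\mathcal W_0]_q=\rho\mathcal W_{-k-1}-\rho\mathcal W_{k+1}$; $[\mathcal G_{k+1},\mathcal W_1]_q=[\mathcal W_1,\tilde{\mathcal G}_{k+1}]_q=\rho\mathcal W_{k+2}-\rho\mathcal W_{-k}$; $[\mathcal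 W_{-k},\mathcal W_{-\ell}]=0$, $[\mathcal W_{k+1},\mathcal W_{\ell+1}]=0$; $[\mathcal W_{-k},\mathcal W_{\ell+1}]+[\mathcal W_{k+1},\mathcal W_{-\ell}]=0$; $[\mathcal W_{-k},\mathcal G_{\ell+1}]+[\mathcal G_{k+1},\mathcal W_{-\ell}]=0$; $[\mathcal W_{-k},\tilde{\mathcal G}_{\ell+1}]+[\tilde{\mathcal G}_{k+1},\mathcal W_{-\ell}]=0$; $[\mathcal W_{k+1},\mathcal G_{\ell+1}]+[\mathcal G_{k+1},\mathcal W_{\ell+1}]=0$; $[\mathcal W_{k+1},\tilde{\mathcal G}_{\ell+1}]+[\tilde{\mathcal G}_{k+1},\mathcal W_{\ell+1}]=0$; $[\mathcal G_{k+1},\mathcal G_{\ell+1}]=0$, $[\tilde{\mathcal G}_{k+1},\tilde{\mathcal G}_{\ell+1}]=0$; $[\tilde{\mathcal G}_{k+1},\mathcal G_{\ell+1}]+[\mathcal G_{k+1},\tilde{\mathcal G}_{\ell+1}]=0$. *)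

(* Defs.v *)
From HB Require Import structures.
From mathcomp Require Import all_boot all_order all_algebra.
Set Implicit Arguments. Unset Strict Implicit. Unset Printing Implicit Defensive.
Import GRing.Theory.
Local Open Scope ring_scope.

Definition comm (A : pzRingType) (X Y : A) : A := X * Y - Y * X.

Definition qcomm (F : fieldType) (A : algType F) (q : F) (X Y : A) : A :=
  q *: (X * Y) - q^-1 *: (Y * X).

Definition rho_of (F : fieldType) (q : F) : F := - (q ^+ 2 - q ^- 2) ^+ 2.

Definition not_root_of_unity (F : fieldType) (q : F) : Prop :=
  forall n : nat, (0 < n)%N -> q ^+ n != 1.

(* Defining relations of O_q for a family of elements of an F-algebra A.
   Indexing convention (k : nat):
     Wm k = W_{-k},  Wp k = W_{k+1},  G k = G_{k+1},  Gt k = ~G_{k+1}. *)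
Definition Oq_rels (F : fieldType) (A : algType F) (q : F)
  (Wm Wp G Gt : nat -> A) : Prop :=
  let rho := rho_of q in
  forall k l : nat,
  (comm (Wm 0%N) (Wp k) = (q + q^-1)^-1 *: (Gt k - G k)
  /\ comm (Wm k) (Wp 0%N) = (q + q^-1)^-1 *: (Gt k - G k)
  /\ qcomm q (Wm 0%N) (G k) = rho *: (Wm k.+1 - Wp k)
  /\ qcomm q (Gt k) (Wm 0%N) = rho *: (Wm k.+1 - Wp k)
  /\ qcomm q (G k) (Wp 0%N) = rho *: (Wp k.+1 - Wm k)
  /\ qcomm q (Wp 0%N) (Gt k) = rho *: (Wp k.+1 - Wm k)
  /\ comm (Wm k) (Wm l) = 0
  /\ comm (Wp k) (Wp l) = 0
  /\ comm (Wm k) (Wp l) + comm (Wp k) (Wm l) = 0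
  /\ comm (Wm k) (G l) + comm (G k) (Wm l) = 0
  /\ comm (Wm k) (Gt l) + comm (Gt k) (Wm l) = 0
  /\ comm (Wp k) (G l) + comm (G k) (Wp l) = 0
  /\ comm (Wp k) (Gt l) + comm (Gt k) (Wp l) = 0
  /\ comm (G k) (G l) = 0
  /\ comm (Gt k) (Gt l) = 0 /\
      comm (Gt k) (G l) + comm (G k) (Gt l) = 0).

(* Main.v *)
Require Import Defs.
From mathcomp Require Import all_boot all_order all_algebra.
From mathcomp Require Import ring.
Import GRing.Theory.
Local Open Scope ring_scope.
Set Implicit Arguments. Unset Strict Implicit.

Section LC.
Variables (F : fieldType) (A : lmodType F).
Definition lc (s : seq A) (x : nat -> F) : A := \sum_(i < size s) x i *: s`_i.
Definition delta (j : nat) : nat -> F := fun i => if i == j then 1 else 0.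
Lemma lcD s x y : lc s x + lc s y = lc s (fun i => x i + y i).
Proof. by rewrite /lc -big_split; apply: eq_bigr => i _; rewrite scalerDl. Qed.
Lemma lcN s x : - lc s x = lc s (fun i => - x i).
Proof. by rewrite /lc -sumrN; apply: eq_bigr => i _; rewrite scaleNr. Qed.
Lemma lcZ s c x : c *: lc s x = lc s (fun i => c * x i).
Proof. by rewrite /lc scaler_sumr; apply: eq_bigr => i _; rewrite scalerA. Qed.
Lemma lc_atom s j : (j < size s)%N -> s`_j = lc s (delta j).
Proof.
move=> hj; rewrite /lc (bigD1 (Ordinal hj)) //= /delta eqxx scale1r big1 ?addr0 //.
move=> i hi; have -> : (i == j :> nat) = false.
  by apply/negbTE; apply: contra hi => /eqP h; apply/eqP; apply: val_inj.
by rewrite scale0r.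
Qed.
Lemma lc_atom' s j x : (j < size s)%N -> s`_j = x -> x = lc s (delta j).
Proof. by move=> h <-; apply: lc_atom. Qed.
Lemma lc_ext s x y : (forall i, (i < size s)%N -> x i = y i) -> lc s x = lc s y.
Proof. by move=> h; apply: eq_bigr => i _; rewrite h. Qed.
Lemma solve_sc (u v w : A) (a : F) : a != 0 -> u - a *: v = w -> v = a^-1 *: (u - w).
Proof. by move=> ha <-; rewrite opprB addrC subrK scalerA mulVf // scale1r. Qed.
End LC.
Arguments delta {F}.

Ltac lcfold := repeat (first [rewrite lcZ | rewrite lcN | rewrite lcD]).
Ltac expand := rewrite ?(mulrBl, mulrBr, mulrDl, mulrDr, scalerBr, scalerDr, scalerN, mulrN, mulNr, scalerA, mulrA, =^~ scalerAl, =^~ scalerAr).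

Theorem lemma11p4 (F : fieldType) (q : F) (A : algType F)
  (Wm Wp G Gt : nat -> A) :
  q != 0 -> not_root_of_unity q ->
  Oq_rels q Wm Wp G Gt ->
  let Bd := q ^- 2 *: (Wp 0%N * Wm 0%N) - Wm 0%N * Wp 0%N in
  forall k : nat,
    qcomm q (Gt k) (Wm 0%N)
      = (q - q^-1) *: (Wm 0%N * Gt k) - q ^+ 2 *: comm Bd (Wm k)
 /\ qcomm q (Wp 0%N) (Gt k)
      = (q - q^-1) *: (Wp 0%N * Gt k) + comm Bd (Wp k).
Proof.
move=> q0 nru H Bd k.
have q2 : q ^+ 2 + 1 != 0.
  apply/negP => /eqP h; move: (nru 4%N isT); rewrite (_ : q ^+ 4 = (q ^+ 2) ^+ 2).
    by rewrite -[q ^+ 2]opprK (addr0_eq h) sqrrN expr1n eqxx.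
  by rewrite -exprM.
have qq : q + q^-1 != 0.
  apply: contra q2 => /eqP h; apply/eqP.
  have : q * (q + q^-1) = 0 by rewrite h mulr0.
  by rewrite mulrDr mulfV // expr2.
have [h1 [h2 [h3 [h4 [h5 [h6 [h7 [h8 _]]]]]]]] := H k k.
have [_ [_ [_ [_ [_ [_ [h7' [h8' _]]]]]]]] := H 0%N k.
rewrite /Bd; clear Bd.
have e3 : qcomm q (Wm 0%N) (G k) = qcomm q (Gt k) (Wm 0%N) by rewrite h3 h4.
have e4 : qcomm q (G k) (Wp 0%N) = qcomm q (Wp 0%N) (Gt k) by rewrite h5 h6.
rewrite /qcomm /comm in h1 h2 e3 e4 h7' h8' *.
move: h1 h2 e3 e4 h7' h8'.
set c := (q + q^-1)^-1.
set W0 := Wm 0%N. set W1 := Wp 0%N. set X := Wm k. set Y := Wp k.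
set g := G k. set t := Gt k.
move=> h1 h2 e3 e4 h7' h8'; split.
- have e0 : W0 * X = X * W0 by apply/eqP; rewrite -subr_eq0; apply/eqP; exact: h7'.
  have e1 : W1 * W0 * X = W1 * X * W0 by rewrite -mulrA e0 mulrA.
  have e2 : X * W0 * W1 = W0 * X * W1 by rewrite -e0.
  have hp2 := congr1 (fun z => z * W0) h2; rewrite /= in hp2.
  have hp4 := congr1 (fun z => W0 * z) h2; rewrite /= in hp4.
  move: hp2 hp4; expand; move/eqP; rewrite subr_eq => /eqP hp2.
  move/eqP; rewrite subr_eq => /eqP hp4.
  have g2 := solve_sc (invr_neq0 q0) e3.
  expand.
  rewrite e1 e2 hp2 hp4 g2.
  pose s := [:: W1 * X * W0; W0 * W1 * X; t * W0; W0 * t; W0 * g].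
  have a0 : W1 * X * W0 = lc s (delta 0%N).
  by apply: lc_atom'.
  have a1 : W0 * W1 * X = lc s (delta 1%N) by apply: lc_atom'.
  have a2 : t * W0 = lc s (delta 2%N) by apply: lc_atom'.
  have a3 : W0 * t = lc s (delta 3%N) by apply: lc_atom'.
  have a4 : W0 * g = lc s (delta 4%N) by apply: lc_atom'.
  rewrite a0 a1 a2 a3 a4; lcfold.
  apply: lc_ext => i _; rewrite /delta.
  do 5?[case: i => [|i]] => /=; rewrite /c; field; by rewrite q0 -expr2 q2 oner_eq0.
- have e0 : W1 * Y = Y * W1 by apply/eqP; rewrite -subr_eq0; apply/eqP; exact: h8'.
  have f1 : Y * W1 * W0 = W1 * Y * W0 by rewrite -e0.
  have f2 : W0 * W1 * Y = W0 * Y * W1 by rewrite -mulrA e0 mulrA.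
  have hp2 := congr1 (fun z => W1 * z) h1; rewrite /= in hp2.
  have hp4 := congr1 (fun z => z * W1) h1; rewrite /= in hp4.
  move: hp2 hp4; expand; move/eqP; rewrite subr_eq => /eqP hp2.
  move/eqP; rewrite subr_eq => /eqP hp4.
  have g2 := solve_sc (invr_neq0 q0) e4.
  expand.
  rewrite f1 f2 hp2 hp4 g2.
  pose s := [:: W1 * Y * W0; Y * W0 * W1; W1 * t; t * W1; g * W1].
  have a0 : W1 * Y * W0 = lc s (delta 0%N) by apply: lc_atom'.
  have a1 : Y * W0 * W1 = lc s (delta 1%N) by apply: lc_atom'.
  have a2 : W1 * t = lc s (delta 2%N) by apply: lc_atom'.
  have a3 : t * W1 = lc s (delta 3%N) by apply: lc_atom'.
  have a4 : g * W1 = lc s (delta 4%N) by apply: lc_atom'.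
  rewrite a0 a1 a2 a3 a4; lcfold.
  apply: lc_ext => i _; rewrite /delta.
  do 5?[case: i => [|i]] => /=; rewrite /c; field; by rewrite q0 -expr2 q2 oner_eq0.
Qed.
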